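(* Let $P$ be a finite set of points in the plane and let $G(P,S)$ be an increasing-chord geometric graph with vertex set $P$ and edge set $S$. Then every edge of the Gabriel graph of $P$ belongs to $S$.
   Context: The Gabriel graph of a point set $P$ is the geometric graph with vertex set $P$ having an edge $\overline{pq}$ between $p,q\in P$ if and only if the closed disk with diameter $\overline{pq}$ contains no point of $P\setminus\{p,q\}$ in its interior or on its boundary. A geometric path $(v_1,\dots,v_k)$ is self-approaching from $v_1$ to $v_k$ if for every three distinct points $a,b,c$ appearing in this order along the path (possibly interior to edges) $|\overline{bc}|<|\overline{ac}|$, where $|\cdot|$ is Euclidean length. A geometric graph (point set plus straight-line edges) is increasing-chord if for every pair of vertices $u,v$ it contains a path between them that is self-approaching both from $u$ to $v$ and from $v$ to $u$. *)

(* Defs.v *)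
From Stdlib Require Import Reals List.
Import ListNotations.
Open Scope R_scope.

Definition pt : Type := (R * R)%type.

Definition dist (a b : pt) : R :=
  sqrt ((fst a - fst b) ^ 2 + (snd a - snd b) ^ 2).

Definition midpoint (a b : pt) : pt :=
  ((fst a + fst b) / 2, (snd a + snd b) / 2).

Definition in_diam_disk (p q r : pt) : Prop :=
  dist r (midpoint p q) <= dist p q / 2.

Definition gabriel_edge (P : list pt) (p q : pt) : Prop :=
  In p P /\ In q P /\ p <> q /\
  forall r, In r P -> r <> p -> r <> q -> ~ in_diam_disk p q r.

(* A geometric graph with vertex set P and (undirected) edge set S:
   S is a relation on points; the edge {a,b} is present iff S a b \/ S b a. *)
Definition edge (S : pt -> pt -> Prop) (a b : pt) : Prop := S a b \/ S b a.

Fixpoint is_path (S : pt -> pt -> Prop) (vs : list pt) : Prop :=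
  match vs with
  | a :: ((b :: _) as tl) => edge S a b /\ is_path S tl
  | _ => True
  end.

(* Positions on the polyline (v_0, ..., v_{k-1}): (i, t) with i < k-1 and
   0 <= t <= 1 denotes the point (1-t) v_i + t v_{i+1}. *)
Definition valid_pos (vs : list pt) (s : nat * R) : Prop :=
  (S (fst s) < length vs)%nat /\ 0 <= snd s <= 1.

Definition pos_pt (vs : list pt) (s : nat * R) : pt :=
  let a := nth (fst s) vs (0, 0) in
  let b := nth (S (fst s)) vs (0, 0) in
  ((1 - snd s) * fst a + snd s * fst b, (1 - snd s) * snd a + snd s * snd b).

Definition pos_lt (s1 s2 : nat * R) : Prop :=
  (fst s1 < fst s2)%nat \/ (fst s1 = fst s2 /\ snd s1 < snd s2).

Definition self_approaching (vs : list pt) : Prop :=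
  forall s1 s2 s3,
    valid_pos vs s1 -> valid_pos vs s2 -> valid_pos vs s3 ->
    pos_lt s1 s2 -> pos_lt s2 s3 ->
    let a := pos_pt vs s1 in let b := pos_pt vs s2 in let c := pos_pt vs s3 in
    a <> b -> b <> c -> a <> c ->
    dist b c < dist a c.

Definition increasing_chord (P : list pt) (S : pt -> pt -> Prop) : Prop :=
  forall u v, In u P -> In v P ->
    exists vs : list pt,
      vs <> [] /\ hd (0, 0) vs = u /\ last vs (0, 0) = v /\
      is_path S vs /\ self_approaching vs /\ self_approaching (rev vs).

(* Main.v *)
Require Import Defs.
From Stdlib Require Import Reals List.
From Stdlib Require Import Lra Lia Psatz Classical.
Import ListNotations.
Open Scope R_scope.

Definition sq (a b : pt) := (fst a - fst b)^2 + (snd a - snd b)^2.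
Definition mix (s:R) (a b : pt) : pt :=
  ((1 - s) * fst a + s * fst b, (1 - s) * snd a + s * snd b).

Lemma pt_neq_comp (a b : pt) : a <> b -> fst a <> fst b \/ snd a <> snd b.
Proof. destruct a as [a1 a2], b as [b1 b2]; simpl; intros H.
 destruct (Req_dec a1 b1); destruct (Req_dec a2 b2); subst; auto. Qed.

Lemma sq_pos_neq (a b : pt) : a <> b -> sq a b > 0.
Proof. intros H. destruct (pt_neq_comp _ _ H) as [h|h]; unfold sq;
 destruct a as [a1 a2], b as [b1 b2]; simpl in *.
 - assert (0 < (a1-b1)*(a1-b1)).
   { destruct (Rlt_or_le 0 (a1-b1)). apply Rmult_lt_0_compat; lra.
     replace ((a1-b1)*(a1-b1)) with ((b1-a1)*(b1-a1)) by ring.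
     apply Rmult_lt_0_compat; lra. }
   pose proof (pow2_ge_0 (a2-b2)). assert ((a1-b1)^2 = (a1-b1)*(a1-b1)) by ring. lra.
 - assert (0 < (a2-b2)*(a2-b2)).
   { destruct (Rlt_or_le 0 (a2-b2)). apply Rmult_lt_0_compat; lra.
     replace ((a2-b2)*(a2-b2)) with ((b2-a2)*(b2-a2)) by ring.
     apply Rmult_lt_0_compat; lra. }
   pose proof (pow2_ge_0 (a1-b1)). assert ((a2-b2)^2 = (a2-b2)*(a2-b2)) by ring. lra. Qed.

Lemma key (p v q : pt) : p <> v ->
  (forall s, 0 <= s < 1 -> mix s p v <> q -> sq v q < sq (mix s p v) q) ->
  (fst v - fst p)*(fst v - fst q) + (snd v - snd p)*(snd v - snd q) <= 0.
Proof.
  intros Hpv H.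
  assert (HD := sq_pos_neq _ _ Hpv).
  destruct p as [p1 p2], v as [v1 v2], q as [q1 q2]; unfold sq, mix in *; simpl in *.
  set (D := (p1-v1)^2 + (p2-v2)^2) in *.
  set (X := (v1-p1)*(q1-p1) + (v2-p2)*(q2-p2)).
  destruct (Rle_or_lt ((v1 - p1) * (v1 - q1) + (v2 - p2) * (v2 - q2)) 0) as [h|h]; [exact h|].
  exfalso.
  assert (HXD : X < D) by (unfold X, D; nra).
  assert (F : forall s, 0 <= s < 1 -> (1+s)*D >= 2*X ->
      ((1 - s) * p1 + s * v1, (1 - s) * p2 + s * v2) = (q1,q2)).
  { intros s Hs Hs2. apply NNPP; intros Hn. specialize (H s Hs Hn).
    assert (E : ((1 - s) * p1 + s * v1 - q1) ^ 2 + ((1 - s) * p2 + s * v2 - q2) ^ 2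
       - ((v1 - q1) ^ 2 + (v2 - q2) ^ 2) = (1-s)*(2*X - (1+s)*D)) by (unfold X, D; ring).
    assert (0 < (1-s)*(2*X - (1+s)*D)) by lra.
    assert (0 < 1 - s) by lra. nra. }
  assert (G : forall s1 s2, 0 <= s1 < 1 -> (1+s1)*D >= 2*X ->
     0 <= s2 < 1 -> (1+s2)*D >= 2*X -> s1 < s2 -> False).
  { intros s1 s2 a b c d e. pose proof (F s1 a b) as E1. pose proof (F s2 c d) as E2.
    rewrite <- E2 in E1. injection E1 as E1a E1b.
    assert (E3 : (s2 - s1) * (v1 - p1) = 0) by lra.
    assert (E4 : (s2 - s1) * (v2 - p2) = 0) by lra.
    apply Rmult_integral in E3; apply Rmult_integral in E4.
    destruct E3; [lra|]; destruct E4; [lra|]. unfold D in HD. nra. }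
  destruct (Rle_or_lt (2*X) D).
  - apply (G 0 (1/2)); lra.
  - apply (G (2*X/D - 1) (X/D)).
    + split.
      * apply (Rmult_le_reg_r D); [lra|]. field_simplify; lra.
      * apply (Rmult_lt_reg_r D); [lra|]. field_simplify; lra.
    + right. field. lra.
    + split.
      * apply (Rmult_le_reg_r D); [lra|]. field_simplify; lra.
      * apply (Rmult_lt_reg_r D); [lra|]. field_simplify; lra.
    + replace ((1+X/D)*D) with (D+X) by (field; lra). lra.
    + apply (Rmult_lt_reg_r D); [lra|]. field_simplify; lra.
Qed.

Lemma disk_of (p q v : pt) :
  (fst v - fst p)*(fst v - fst q) + (snd v - snd p)*(snd v - snd q) <= 0 ->
  in_diam_disk p q v.
Proof.
  destruct p as [p1 p2], q as [q1 q2], v as [v1 v2].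
  unfold in_diam_disk, dist, midpoint; simpl. intros H.
  set (x := (v1 - (p1 + q1) / 2) ^ 2 + (v2 - (p2 + q2) / 2) ^ 2).
  set (y := (p1 - q1) ^ 2 + (p2 - q2) ^ 2).
  assert (hx : 0 <= x) by (unfold x; pose proof (pow2_ge_0 (v1 - (p1 + q1) / 2)); pose proof (pow2_ge_0 (v2 - (p2 + q2) / 2)); lra).
  assert (hy : 0 <= y) by (unfold y; pose proof (pow2_ge_0 (p1-q1)); pose proof (pow2_ge_0 (p2-q2)); lra).
  assert (hxy : 4 * x <= y) by (unfold x, y; nra).
  pose proof (sqrt_sqrt x hx). pose proof (sqrt_sqrt y hy).
  pose proof (sqrt_pos x). pose proof (sqrt_pos y).
  destruct (Rle_or_lt (sqrt x) (sqrt y / 2)) as [h|h]; auto.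
  assert (sqrt y / 2 * (sqrt y / 2) < sqrt x * sqrt x)
    by (apply Rmult_le_0_lt_compat; lra).
  lra.
Qed.

Lemma sqrt_lt_inv x y : 0 <= x -> sqrt x < sqrt y -> x < y.
Proof. intros hx h. destruct (Rlt_or_le x y) as [|h2]; auto.
  apply sqrt_le_1_alt in h2. lra. Qed.

Lemma first_change (l : list pt) (p d : pt) :
  hd d l = p -> last l d <> p ->
  exists j, (S j < length l)%nat /\ nth j l d = p /\ nth (S j) l d <> p.
Proof.
  induction l as [|a l IH]; simpl; intros H1 H2.
  - congruence.
  - destruct l as [|b l'].
    + congruence.
    + destruct (classic (b = p)) as [hb|hb].
      * destruct (IH hb H2) as [j [h1 [h2 h3]]].
        exists (S j). simpl in *. repeat split; auto; lia.
      * exists 0%nat. simpl. repeat split; auto; lia.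
Qed.

Lemma path_edge (S' : pt -> pt -> Prop) (d : pt) : forall l j,
  is_path S' l -> (S j < length l)%nat -> edge S' (nth j l d) (nth (S j) l d).
Proof.
  induction l as [|a l IH]; intros j H1 H2; simpl in *; [lia|].
  destruct l as [|b l']; simpl in *; [lia|].
  destruct H1 as [e hp]. destruct j as [|j]; [exact e|].
  apply (IH j hp). simpl. lia.
Qed.

Lemma last_nth' (l : list pt) (d : pt) : last l d = nth (length l - 1) l d.
Proof.
  induction l as [|a l IH]; simpl; auto.
  destruct l as [|b l']; simpl; auto.
  simpl in IH. rewrite IH. replace (length l' - 0)%nat with (length l') by lia. reflexivity.
Qed.

Lemma mix_neq s p v : 0 <= s < 1 -> p <> v -> mix s p v <> v.
Proof.
  intros hs hpv E. apply hpv. destruct p as [p1 p2], v as [v1 v2].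
  unfold mix in E; simpl in E. injection E as E1 E2.
  assert ((1-s)*(p1 - v1) = 0) by lra. assert ((1-s)*(p2 - v2) = 0) by lra.
  apply Rmult_integral in H; apply Rmult_integral in H0.
  destruct H; [lra|]; destruct H0; [lra|]. f_equal; lra.
Qed.

Theorem lemma2 (P : list pt) (S : pt -> pt -> Prop) :
  (forall a b, S a b -> In a P /\ In b P) ->
  increasing_chord P S ->
  forall p q, gabriel_edge P p q -> edge S p q.
Proof.
  intros HS HIC p q [Hp [Hq [Hpq HG]]].
  destruct (HIC p q Hp Hq) as [vs [Hne [Hhd [Hlast [Hpath [Hsa _]]]]]].
  assert (Hl : last vs (0,0) <> p) by (rewrite Hlast; auto).
  destruct (first_change vs p (0,0) Hhd Hl) as [j [Hj [Hjp Hjv]]].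
  set (v := nth (Datatypes.S j) vs (0,0)) in *.
  assert (He : edge S p v) by (rewrite <- Hjp; apply path_edge; auto).
  destruct (classic (v = q)) as [Hvq|Hvq]; [rewrite <- Hvq; exact He|].
  exfalso.
  assert (Hv : In v P) by (destruct He as [h|h]; apply HS in h; tauto).
  apply (HG v Hv Hjv Hvq). apply disk_of.
  assert (Hpv : p <> v) by (intro h; apply Hjv; symmetry; exact h).
  apply key; [exact Hpv|].
  intros s Hs Hne'.
  destruct (Nat.eq_dec (Datatypes.S j) (length vs - 1)) as [e|e].
  { exfalso. apply Hvq. unfold v. rewrite e, <- last_nth'. exact Hlast. }
  specialize (Hsa (j, s) (j, 1) ((length vs - 2)%nat, 1)).
  cbv zeta in Hsa.
  assert (E1 : pos_pt vs (j, s) = mix s p v) by (unfold pos_pt, mix; simpl; rewrite Hjp; reflexivity).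
  assert (E2 : pos_pt vs (j, 1) = v).
  { unfold pos_pt; simpl. fold v. destruct v as [v1 v2]; simpl. f_equal; ring. }
  assert (E3 : pos_pt vs ((length vs - 2)%nat, 1) = q).
  { unfold pos_pt; simpl. replace (Datatypes.S (length vs - 2)) with (length vs - 1)%nat by lia.
    rewrite <- last_nth', Hlast. destruct q as [q1 q2]; simpl. f_equal; ring. }
  rewrite E1, E2, E3 in Hsa.
  assert (Hd : Defs.dist v q < Defs.dist (mix s p v) q).
  { apply Hsa.
    - unfold valid_pos; simpl; split; [lia|lra].
    - unfold valid_pos; simpl; split; [lia|lra].
    - unfold valid_pos; simpl; split; [lia|lra].
    - right; simpl; split; [reflexivity|lra].
    - left; simpl; lia.
    - apply mix_neq; auto.
    - exact Hvq.
    - exact Hne'. }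
  unfold Defs.dist in Hd. apply sqrt_lt_inv in Hd; [exact Hd|].
  pose proof (pow2_ge_0 (fst v - fst q)); pose proof (pow2_ge_0 (snd v - snd q)); lra.
Qed.
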